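(* Let $m<n$ be natural numbers, let $\mathcal{I}$ be the ideal of thin subsets of $[\omega]^n$, and let $\psi=\lambda^{(n-m)}\partial^{(n-m)}$. Then there is $S\subseteq[\omega]^n$ which is not $(<\!\aleph_0)$-near-closed.
   Context: $T\subseteq[\omega]^n$ is thick if for every $j\geq n$ there is $s\in[\omega]^j$ with $[s]^n\subseteq T$; thin otherwise. For $T\subseteq[\omega]^n$, $\partial^{(n-m)}T=\{s\in[\omega]^m:\exists t\in[\omega]^{n-m}\ (s\cup t\in T)\}$, and for $A\subseteq[\omega]^m$, $\lambda^{(n-m)}A=\{s\in[\omega]^n:[s]^m\subseteq A\}$. A set $T\subseteq[\omega]^n$ is closed if $\psi(T)=T$. A set $S$ is $(<\!\aleph_0)$-near-closed if there are $k<\omega$ and closed $T_0,\dots,T_{k-1}$ with $S\,\Delta\,(T_0\cup\dots\cup T_{k-1})\in\mathcal{I}$. *)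

(* Defs.v *)
From HB Require Import structures.
From mathcomp Require Import all_boot.
From mathcomp Require Import finmap.

Set Implicit Arguments.
Unset Strict Implicit.
Unset Printing Implicit Defensive.

Local Open Scope fset_scope.

(* Finite subsets of omega are represented as {fset nat};
   [omega]^n = { s : {fset nat} | #|s| = n }.
   A family of finite sets is a predicate {fset nat} -> Prop. *)

Definition fam := {fset nat} -> Prop.

Definition subfam (n : nat) (T : fam) : Prop :=
  forall s, T s -> #|` s| = n.

Definition thick (n : nat) (T : fam) : Prop :=
  forall j, n <= j -> exists s : {fset nat},
    #|` s| = j /\ (forall t : {fset nat}, t `<=` s -> #|` t| = n -> T t).

Definition thin (n : nat) (T : fam) : Prop := ~ thick n T.

Definition shadow (n m : nat) (T : fam) : fam :=
  fun s => #|` s| = m /\ exists t : {fset nat}, #|` t| = n - m /\ T (s `|` t).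

Definition lam (n m : nat) (A : fam) : fam :=
  fun s => #|` s| = n /\ (forall t : {fset nat}, t `<=` s -> #|` t| = m -> A t).

Definition psi (n m : nat) (T : fam) : fam := lam n m (shadow n m T).

Definition closed (n m : nat) (T : fam) : Prop :=
  forall s, psi n m T s <-> T s.

Definition symdiff (A B : fam) : fam :=
  fun s => (A s /\ ~ B s) \/ (B s /\ ~ A s).

Definition bigunion (k : nat) (T : nat -> fam) : fam :=
  fun s => exists i, i < k /\ T i s.

Definition near_closed (n m : nat) (S : fam) : Prop :=
  exists (k : nat) (T : nat -> fam),
    (forall i, i < k -> closed n m (T i)) /\
    thin n (symdiff S (bigunion k T)).

(* Main.v *)
Require Import Defs.
From mathcomp Require Import all_boot.
From mathcomp Require Import finmap.
From mathcomp Require Import all_algebra zify.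
From Stdlib Require Import ClassicalEpsilon.
Set Implicit Arguments. Unset Strict Implicit. Unset Printing Implicit Defensive.
Import GRing.Theory Num.Theory.

Import GRing.Theory Num.Theory.


Local Open Scope ring_scope.
Lemma poly_uniq n0 (c c' : 'I_n0.+1 -> nat) (s : seq nat) : uniq s -> (n0.+1 <= size s)%N ->
  (forall i, i \in s -> (\sum_(l < n0.+1) c l * i ^ l)%N = (\sum_(l < n0.+1) c' l * i ^ l)%N) ->
  forall l, c l = c' l.
Proof.
move=> us hs H.
pose q : {poly int} := \poly_(l < n0.+1) ((c (inord l))%:R - (c' (inord l))%:R).
have q0 : q = 0.
  apply/eqP; apply/negPn/negP => qn0.
  have := max_poly_roots qn0 (rs := map (fun i : nat => i%:R : int) s).
  rewrite size_map.
  have -> : all (root q) [seq i%:R | i <- s].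
    apply/allP => x /mapP [i iS ->].
    rewrite /root horner_poly.
    have := congr1 (fun x : nat => x%:R : int) (H i iS).
    rewrite !natr_sum => E.
    rewrite (eq_bigr (fun l : 'I_n0.+1 => (c l * i ^ l)%:R - (c' l * i ^ l)%:R : int)).
      by rewrite sumrB E subrr.
    by move=> l _; rewrite inord_val !natrM !natrX mulrBl.
  have -> : uniq [seq i%:R : int | i <- s].
    by rewrite map_inj_uniq // => x y /eqP; rewrite eqr_nat => /eqP.
  move=> /(_ isT isT) h.
  have := size_poly n0.+1 (fun l => ((c (inord l))%:R - (c' (inord l))%:R : int)).
  rewrite -/q => h2.
  by have := leq_trans h (leq_trans h2 hs); rewrite ltnn.
move=> l.
have := congr1 (fun p : {poly int} => p`_l) q0.
rewrite coef_poly ltn_ord inord_val coef0 => /eqP; rewrite subr_eq0 eqr_nat => /eqP.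
done.
Qed.
Local Close Scope ring_scope.
Lemma bern x e : x ^ e.+1 + e.+1 * x ^ e <= (x + 1) ^ e.+1.
Proof.
elim: e => [|e IH]; first by rewrite expn1 expn0; lia.
rewrite (expnS x e.+1) (expnS (x+1) e.+1) (expnS x e).
move: IH; rewrite (expnS x e); set X := x ^ e; set Y := (x + 1) ^ e.+1 => IH.
nia.
Qed.
Lemma key a : 0 < a -> (a - 1) ^ a * 2 <= a ^ a.
Proof.
case: a => // a _; rewrite subn1 /=.
case: a => [|a]; first by [].
have := bern a.+1 a.+1.
rewrite addn1 (expnS a.+1 a.+1) => H.
set X := a.+1 ^ a.+1 in H *. set Y := a.+2 ^ a.+2 in H *. nia.
Qed.
Lemma leq_expr m n e : m <= n -> m ^ e <= n ^ e.
Proof. by case: e => [|e] h; rewrite ?expn0 // leq_exp2r. Qed.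
Lemma count_ineq a B P : 0 < a -> a * B.+1 <= P -> 2 ^ B * (a - 1) ^ P < a ^ P.
Proof.
move=> a0 hP.
have h1 : (a - 1) ^ (a * B.+1) * 2 ^ B.+1 <= a ^ (a * B.+1).
  by rewrite !expnM -expnMn leq_exp2r // key.
have h2 : (a - 1) ^ (P - a * B.+1) <= a ^ (P - a * B.+1) by apply: leq_expr; lia.
have hP' : P = a * B.+1 + (P - a * B.+1) by lia.
have apos : 0 < a ^ P by rewrite expn_gt0 a0.
rewrite hP' expnD expnD in apos *.
rewrite expnS in h1.
set u := (a - 1) ^ (a * B.+1) in h1 *. set v := a ^ (a * B.+1) in h1 apos *.
set u' := (a - 1) ^ (P - a * B.+1) in h2 *. set v' := a ^ (P - a * B.+1) in h2 apos *.
set w := 2 ^ B in h1 *.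
nia.
Qed.
Lemma bin_le N m : 'C(N, m) <= N ^ m.
Proof.
elim: m N => [|m IH] N; first by rewrite bin0.
case: N => [|N]; first by rewrite bin0n.
rewrite binS expnS.
have := IH N. have := IH N.+1. 
Abort.
Lemma ffact_le N m : N ^_ m <= N ^ m.
Proof.
elim: m N => [|m IH] N; first by rewrite ffactn0.
rewrite ffactnS expnS leq_mul //. apply: leq_trans (IH _) _. apply: leq_expr. by rewrite leq_pred.
Qed.
Lemma bin_le N m : 'C(N, m) <= N ^ m.
Proof.
apply: leq_trans (ffact_le N m). rewrite -bin_ffact leq_pmulr // fact_gt0 //.
Qed.

Lemma counting (F Y Al : finType) (W : {set Y}) (Adv : {set Al})
  (u : Al -> F -> {set Y}) :
  #|Adv| * (2 ^ #|W| - 1) ^ #|F| < (2 ^ #|W|) ^ #|F| ->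
  exists pi : {ffun F -> {set Y}}, forall a, a \in Adv ->
    exists f, forall J, J \in W -> (J \in pi f) = (J \notin u a f).
Proof.
move=> hc.
pose good (pi : {ffun F -> {set Y}}) :=
  [forall a in Adv, [exists f, [forall J in W, (J \in pi f) == (J \notin u a f)]]].
case: (boolP [exists pi in ffun_on (powerset W), good pi]) => [/existsP [pi /andP [_ /forallP g]]|].
  exists pi => a aA; have /implyP/(_ aA)/existsP [f /forallP hf] := g a.
  by exists f => J JW; have /implyP/(_ JW)/eqP := hf J.
move=> /existsPn bad; exfalso.
pose h (p : Al * {ffun F -> {set Y}}) : {ffun F -> {set Y}} :=
  [ffun f => [set J in W | (J \in p.2 f) != (J \in u p.1 f)]].
pose Pi := [set pi : {ffun F -> {set Y}} | pi \in ffun_on (powerset W)].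
pose De := [set D : {ffun F -> {set Y}} | D \in ffun_on (powerset W :\ W)].
have sub : Pi \subset h @: setX Adv De.
  apply/subsetP => pi; rewrite inE => piP.
  have := bad pi; rewrite piP /= => /forallPn [a].
  rewrite negb_imply => /andP [aA /existsPn nf].
  pose D := [ffun f => [set J in W | (J \in pi f) != (J \in u a f)]].
  apply/imsetP; exists (a, D).
    rewrite inE /= aA inE /=; apply/ffun_onP => f.
    rewrite !inE; apply/andP; split.
      apply/eqP => eW.
      have /forallPn [J] := nf f.
      rewrite negb_imply => /andP [JW ne].
      have : J \in D f by rewrite eW.
      rewrite ffunE inE JW /=.
      by move: ne; case: (J \in pi f); case: (J \in u a f).
    by apply/subsetP => J; rewrite ffunE inE => /andP [].
  apply/ffunP => f; apply/setP => J.
  rewrite /h /= !ffunE !inE.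
  case JW: (J \in W) => /=.
    by case: (J \in pi f); case: (J \in u a f).
  move/ffun_onP: piP => /(_ f); rewrite inE => /subsetP /(_ J).
  by case: (J \in pi f) => //; rewrite JW => /(_ isT).
have := leq_trans (subset_leq_card sub) (leq_imset_card _ _).
rewrite cardsX /Pi /De !cardsE !card_ffun_on card_powerset.
have -> : #|powerset W :\ W| = 2 ^ #|W| - 1.
  by rewrite -card_powerset (cardsD1 W (powerset W)) powersetE subxx add1n subn1.
by move=> H; move: hc; rewrite ltnNge H.
Qed.

Lemma block (n m j k : nat) : m < n -> exists X : finType, exists S : {set {set X}},
  (forall w, w \in S -> #|w| = n) /\
  forall a : 'I_k -> {set {set X}}, exists x : {set X}, #|x| = j /\
    forall w : {set X}, w \subset x -> #|w| = n ->
      (w \in S) = ~~ [exists i : 'I_k, [forall v : {set X},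
                        (v \subset w) && (#|v| == m) ==> (v \in a i)]].
Proof.
case: n => [//|n0] mn.
pose Jn := [set J : {set 'I_j} | #|J| == n0.+1].
pose a0 := 2 ^ #|Jn|.
pose K := j * (n0.+1 * j ^ n0.+1 + 1).
pose M := a0 * (K ^ m * k + 1).
pose V := n0.+1 * M * j ^ n0.+1 + 1.
pose F := {ffun 'I_n0.+1 -> 'I_M}.
pose vl (f : F) (i : nat) := \sum_(l < n0.+1) f l * i ^ l.
have vlt : forall f (i : 'I_j), vl f i < V.
  move=> f i; rewrite /V addn1 ltnS /vl.
  have -> : n0.+1 * M * j ^ n0.+1 = \sum_(l < n0.+1) (M * j ^ n0.+1).
    by rewrite sum_nat_const card_ord mulnA.
  apply: leq_sum => l _; apply: leq_mul; first exact: ltnW.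
  have j0 : 0 < j by case: i => [i' /= ?]; lia.
  apply: leq_trans (leq_expr _ (ltnW (ltn_ord i))) _.
  by apply: leq_pexp2l => //; apply: ltnW.
pose X := ('I_j * 'I_V)%type.
pose pt (f : F) (i : 'I_j) : X := (i, Ordinal (vlt f i)).
have ptinj : forall f, injective (pt f) by move=> f i i' [].
have uniqF : forall (f f' : F) (J J' : {set 'I_j}), J \in Jn -> pt f @: J = pt f' @: J' -> f = f'.
  move=> f f' J J' JJ e.
  have agree : forall i, i \in J -> vl f i = vl f' i.
    move=> i iJ.
    have : pt f i \in pt f' @: J' by rewrite -e; apply: imset_f.
    by case/imsetP => i' _ [ei ev]; rewrite ev -ei.
  apply/ffunP => l; apply: val_inj.
  apply: (@poly_uniq n0 (fun l => val (f l)) (fun l => val (f' l)) (map val (enum J))).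
  - by rewrite map_inj_uniq ?enum_uniq //; apply: val_inj.
  - by rewrite size_map -cardE; move: JJ; rewrite inE => /eqP ->.
  - by move=> i /mapP [i0]; rewrite mem_enum => i0J ->; apply: agree.
pose Ms := [set v : {set X} | #|v| == m].
pose Adv := [set a : {ffun 'I_k -> {set {set X}}} | a \in ffun_on (powerset Ms)].
pose u (a : {ffun 'I_k -> {set {set X}}}) (f : F) := [set J : {set 'I_j} |
   [exists i, [forall v : {set X}, (v \subset pt f @: J) && (#|v| == m) ==> (v \in a i)]]].
have hc : #|Adv| * (2 ^ #|Jn| - 1) ^ #|F| < (2 ^ #|Jn|) ^ #|F|.
  rewrite cardsE card_ffun_on card_powerset !card_ord card_ffun !card_ord -expnM.
  apply: count_ineq; first by rewrite expn_gt0.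
  have hMs : #|Ms| <= K ^ m * M ^ m.
    rewrite /Ms card_draws; apply: leq_trans (bin_le _ _) _.
    rewrite -expnMn; apply: leq_expr.
    rewrite card_prod !card_ord /V /K.
    have M1 : 0 < M by rewrite /M muln_gt0 expn_gt0 addn1.
    nia.
  have hM : M * M ^ m <= M ^ n0.+1.
    rewrite -expnS; apply: leq_pexp2l => //.
    by rewrite /M muln_gt0 expn_gt0 addn1.
  have Mm : 0 < M ^ m by rewrite expn_gt0 /M muln_gt0 expn_gt0 addn1.
  rewrite -/a0 in hM *.
  move: hMs hM Mm; rewrite /M.
  set A := a0; set B := K ^ m; set C := (A * (B * k + 1)) ^ m.
  move: (#|Ms|) ((A * (B * k + 1)) ^ n0.+1) => Q P h1 h2 h3.
  apply: leq_trans h2; rewrite -mulnA leq_mul2l; apply/orP; right.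
  have : Q * k <= B * C * k by rewrite leq_mul2r h1 orbT.
  nia.
have [pi hpi] := counting u hc.
exists X.
exists [set w : {set X} | [exists f : F, [exists J in Jn, (w == pt f @: J) && (J \in pi f)]]].
split.
  move=> w; rewrite inE => /existsP [f /existsP [J /and3P [JJ /eqP -> _]]].
  by rewrite card_imset //; move: JJ; rewrite inE => /eqP.
move=> a.
pose a' := [ffun i => a i :&: Ms].
have a'A : a' \in Adv.
  by rewrite inE; apply/ffun_onP => i; rewrite ffunE powersetE subsetIr.
have [f hf] := hpi a' a'A.
exists (pt f @: setT); split.
  by rewrite card_imset // cardsT card_ord.
move=> w wsub wn.
pose J := pt f @^-1: w.
have hw : w = pt f @: J.
  apply/setP => z; apply/idP/idP.
    move=> zw; have := subsetP wsub z zw; case/imsetP => i _ zi.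
    by apply/imsetP; exists i => //; rewrite inE -zi.
  by case/imsetP => i; rewrite inE => iw ->.
have JJ : J \in Jn by rewrite inE -wn hw card_imset.
have -> : (w \in [set w : {set X} | [exists f : F, [exists J in Jn, (w == pt f @: J) && (J \in pi f)]]]) = (J \in pi f).
  rewrite inE; apply/idP/idP.
    case/existsP => f' /existsP [J' /and3P [J'J /eqP e J'pi]].
    have ff : f' = f by apply: (uniqF f' f J' J) => //; rewrite -e.
    subst f'.
    by have <- : J' = J by apply: (imset_inj (ptinj f)); rewrite -e.
  by move=> Jpi; apply/existsP; exists f; apply/existsP; exists J; rewrite JJ Jpi hw eqxx.
rewrite (hf J JJ) inE hw; congr (~~ _); apply: eq_existsb => i.
apply: eq_forallb => v; rewrite ffunE inE.
rewrite inE; by case: (v \subset _); case: (#|v| == m); rewrite ?andbT ?andbF.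
Qed.

Local Open Scope fset_scope.

Definition pb (P : Prop) : bool := if excluded_middle_informative P then true else false.
Lemma pbE (P : Prop) : pb P <-> P.
Proof. by rewrite /pb; case: excluded_middle_informative. Qed.

Definition toF (X : finType) (e : X -> nat) (w : {set X}) : {fset nat} :=
  [fset y in map e (enum w)].
Definition pre (X : finType) (e : X -> nat) (s : {fset nat}) : {set X} :=
  [set y | e y \in s].

Lemma in_toF (X : finType) (e : X -> nat) w z :
  (z \in toF e w) = (z \in map e (enum w)).
Proof. by rewrite /toF inE. Qed.

Lemma mem_toF (X : finType) (e : X -> nat) (ei : injective e) w y :
  (e y \in toF e w) = (y \in w).
Proof. by rewrite in_toF (mem_map ei) mem_enum. Qed.

Lemma card_toF (X : finType) (e : X -> nat) (ei : injective e) w :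
  #|` toF e w| = #|w|.
Proof.
rewrite /toF card_fseq undup_id ?size_map -?cardE //.
by rewrite map_inj_uniq ?enum_uniq.
Qed.

Lemma toF_pre (X : finType) (e : X -> nat) (ei : injective e) (w : {set X}) s :
  s `<=` toF e w -> toF e (pre e s) = s /\ pre e s \subset w.
Proof.
move=> /fsubsetP sub; split.
  apply/fsetP => z; rewrite in_toF; apply/idP/idP.
    by case/mapP => y; rewrite mem_enum inE => ? ->.
  move=> zs; have := sub z zs; rewrite in_toF => /mapP [y _ zy].
  by apply/mapP; exists y => //; rewrite mem_enum inE -zy.
apply/subsetP => y; rewrite inE => /sub.
by rewrite mem_toF.
Qed.

Lemma toF_sub (X : finType) (e : X -> nat) (ei : injective e) (v w : {set X}) :
  v \subset w -> toF e v `<=` toF e w.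
Proof.
move=> /subsetP vw; apply/fsubsetP => z; rewrite !in_toF => /mapP [y].
by rewrite mem_enum => /vw yw ->; rewrite (mem_map ei) mem_enum.
Qed.

Lemma toF_inj (X : finType) (e : X -> nat) (ei : injective e) : injective (toF e).
Proof.
move=> v w h; apply/setP => y; by rewrite -!(mem_toF ei) h.
Qed.

Definition unpair (t : nat) : nat * nat := odflt (0%N, 0%N) (choice.unpickle t : option (nat * nat)).

Definition XS n m (h : m < n) t :=
  constructive_indefinite_description _ (@block n m (unpair t).1 (unpair t).2 h).
Definition Xb n m (h : m < n) t : finType := proj1_sig (XS h t).
Definition SS n m (h : m < n) t :=
  constructive_indefinite_description _ (proj2_sig (XS h t)).
Definition Sb n m (h : m < n) t : {set {set Xb h t}} := proj1_sig (SS h t).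
Lemma Sb_spec n m (h : m < n) t :
  (forall w, w \in Sb h t -> #|w| = n) /\
  forall a : 'I_(unpair t).2 -> {set {set Xb h t}}, exists x : {set Xb h t},
    #|x| = (unpair t).1 /\
    forall w : {set Xb h t}, w \subset x -> #|w| = n ->
      (w \in Sb h t) = ~~ [exists i : 'I_(unpair t).2, [forall v : {set Xb h t},
                        (v \subset w) && (#|v| == m) ==> (v \in a i)]].
Proof. exact: (proj2_sig (SS h t)). Qed.

Definition enc n m (h : m < n) t (x : Xb h t) : nat := choice.pickle (t, choice.pickle x).
Lemma enc_inj n m (h : m < n) t : injective (@enc n m h t).
Proof. by move=> x y /(pcan_inj choice.pickleK) [] /(pcan_inj choice.pickleK). Qed.

Theorem mainTheorem12 (m n : nat) (hmn : m < n) :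
  exists S : fam, subfam n S /\ ~ near_closed n m S.
Proof.
exists (fun s => #|` s| = n /\ exists t (w : {set Xb hmn t}), s = toF (@enc n m hmn t) w /\ w \in Sb hmn t).
split; first by move=> s [].
move=> [k [T [Hcl Hthin]]]; apply: Hthin => j Hj.
have n0 : 0 < n by apply: leq_ltn_trans hmn.
move: (choice.pickle (j, k)) (choice.pickleK (j, k)) => t ut.
have ut' : unpair t = (j, k) by rewrite /unpair ut.
have [Ssz Sp] := Sb_spec hmn t.
rewrite ut' /= in Sp.
pose e := @enc n m hmn t.
have ei : injective e := @enc_inj n m hmn t.
pose a (i : 'I_k) : {set {set Xb hmn t}} :=
  [set v | pb (shadow n m (T i) (toF e v))].
have [x [xj xP]] := Sp a.
exists (toF e x); split; first by rewrite card_toF.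
move=> t' t'sub t'n.
have [e1 wsub] := toF_pre ei t'sub.
set w := pre e t' in e1 wsub.
have wn : #|w| = n by rewrite -(card_toF ei) e1.
have := xP w wsub wn.
have hS : (#|` t'| = n /\ exists t2 (w2 : {set Xb hmn t2}), t' = toF (@enc n m hmn t2) w2 /\ w2 \in Sb hmn t2) <-> (w \in Sb hmn t).
  split.
    move=> [_ [t2 [w2 [e2 w2S]]]].
    have /card_gt0P [y yw] : 0 < #|w| by rewrite wn.
    have : e y \in t' by rewrite -e1 mem_toF.
    rewrite e2 in_toF => /mapP [y2 _].
    rewrite /e /enc => /(pcan_inj choice.pickleK) [tt _].
    subst t2.
    have <- : w2 = w by apply: (toF_inj ei); rewrite -/e -e2 e1.
    done.
  by move=> wS; split => //; exists t, w; split.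
pose PU := [exists i : 'I_k, [forall v : {set Xb hmn t}, (v \subset w) && (#|v| == m) ==> (v \in a i)]].
have hU : bigunion k T t' <-> PU.
  split.
    move=> [i [ik Ti]].
    apply/existsP; exists (Ordinal ik); apply/forallP => v; apply/implyP => /andP [vw /eqP vm].
    have := (Hcl i ik t').2 Ti; rewrite /psi /lam => [[_ H]].
    rewrite inE; apply/pbE; apply: H; last by rewrite card_toF.
    by rewrite -e1; apply: toF_sub.
  move=> /existsP [i /forallP H].
  exists i; split; first exact: ltn_ord.
  apply/(Hcl i (ltn_ord i) t').1; split => // t'' t''sub t''m.
  have t''sub' : t'' `<=` toF e w by rewrite e1.
  have [e3 vsub] := toF_pre ei t''sub'.
  have := H (pre e t''); rewrite vsub /= -(card_toF ei) e3 t''m eqxx /= inE => /pbE.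
  by rewrite e3.
move: hS hU; rewrite /symdiff -/PU.
case: (w \in Sb hmn t); case: PU => //= hS hU _.
  by left; split; [apply/hS | move=> /hU].
by right; split; [apply/hU | move=> /hS].
Qed.
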